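(* Let $A$ be a finite-dimensional semisimple Hopf algebra over $k$, let $\tau$ be a Hopf automorphism of $A$ of finite order $n$, let $G=\langle\tau\rangle$ and $K=A\natural k^G$. Given an $A$-module $N$, make it a $K$-module $M$ by letting $a\natural p_x$ act as $a$ if $x=\tau^{-1}$ and as $0$ otherwise (so $M_{\tau^{-1}}=N$ and $M_x=0$ for $x\neq\tau^{-1}$). Then for every positive multiple $m$ of $n$, $$\nu^A_{m,\tau}(N)=\nu^K_m(M).$$
   Context: $k$ is algebraically closed of characteristic $0$. $k^G$ has basis $\{p_x\}_{x\in G}$ with $p_xp_y=\delta_{x,y}p_x$. The smash coproduct $K=A\natural k^G$ is $A\otimes k^G$ (elements written $a\natural p_x$) with tensor product algebra structure, comultiplication $\Delta(a\natural p_x)=\sum_{y\in G}(a_1\natural p_y)\otimes((y^{-1}\cdot a_2)\natural p_{y^{-1}x})$, counit $\varepsilon(a\natural p_x)=\delta_{1,x}\varepsilon(a)$, antipode $S(a\natural p_x)=(x^{-1}\cdot S(a))\natural p_{x^{-1}}$. $\Lambda_A$ is the normalized integral of $A$ and $\Lambda_K=\Lambda_A\natural p_1$. For a $K$-module $M$, $M_x=p_x\cdot M$. Hopf powers: $h^{[m]}=\sum h_1\cdots h_m$ and $h^{[m,\sigma]}=\sum h_1(\sigma\cdot h_2)\cdots(\sigma^{m-1}\cdot h_m)$ for a Hopf automorphism $\sigma$. Indicators: $\nu^K_m(V)=\chi_V(\Lambda_K^{[m]})$ for a $K$-module $V$ with character $\chi_V$; $\nu^A_{m,\sigma}(W)=\chi_W(\Lambda_A^{[m,\sigma]})$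 for an $A$-module $W$ and Hopf automorphism $\sigma$ whose order divides $m$. *)

(* Defs.v *)
(* Hopf algebras are formalized by structure constants
   with respect to a basis indexed by a finite type I (finite dimension). *)
From HB Require Import structures.
From mathcomp Require Import all_boot all_order all_algebra.
Set Implicit Arguments. Unset Strict Implicit. Unset Printing Implicit Defensive.
Import Order.TTheory GRing.Theory Num.Theory.
Local Open Scope ring_scope.

Section HopfDefs.
Variables (k : fieldType) (I : finType).

Definition vec := {ffun I -> k}.

(* structure constants:
   e_i e_j = sum_l hmul i j l e_l,  1 = sum_l hunit l e_l,
   Delta(e_i) = sum_{j,l} hcomul i j l e_j (x) e_l,
   eps(e_i) = hcounit i,  S(e_i) = hanti i *)
Record hopf_data := HopfData {
  hmul : I -> I -> vec;
  hunit : vec;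
  hcomul : I -> I -> I -> k;
  hcounit : I -> k;
  hanti : I -> vec }.

Variable H : hopf_data.

Definition bvec (i : I) : vec := [ffun j => (i == j)%:R].

Definition mulv (a b : vec) : vec :=
  [ffun l => \sum_i \sum_j a i * b j * hmul H i j l].

Definition counitv (a : vec) : k := \sum_i a i * hcounit H i.

Definition lapp (sigma : I -> vec) (v : vec) : vec :=
  [ffun l => \sum_i v i * sigma i l].

Definition is_hopf : Prop :=
  [/\ (forall a b c, mulv (mulv a b) c = mulv a (mulv b c)) /\
      (forall a, mulv (hunit H) a = a /\ mulv a (hunit H) = a),
      (forall i j l q, \sum_p hcomul H i p q * hcomul H p j l
                        = \sum_p hcomul H i j p * hcomul H p l q),
      (forall i l, \sum_j hcomul H i j l * hcounit H j = (i == l)%:R /\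
                   \sum_j hcomul H i l j * hcounit H j = (i == l)%:R),
      [/\ (forall a b j l,
             \sum_p mulv (bvec a) (bvec b) p * hcomul H p j l
             = \sum_j1 \sum_l1 \sum_j2 \sum_l2
                 hcomul H a j1 l1 * hcomul H b j2 l2
                 * hmul H j1 j2 j * hmul H l1 l2 l),
          (forall j l, \sum_p hunit H p * hcomul H p j l = hunit H j * hunit H l),
          (forall a b, counitv (mulv a b) = counitv a * counitv b) &
          counitv (hunit H) = 1] &
      (forall i q,
         \sum_j \sum_l hcomul H i j l * mulv (hanti H j) (bvec l) q
           = hcounit H i * hunit H q /\
         \sum_j \sum_l hcomul H i j l * mulv (bvec j) (hanti H l) q
           = hcounit H i * hunit H q)].

(* finite-dimensional modules: representations rho : A -> M_r(k),
   given on the basis and extended linearly *)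
Definition rep (r : nat) (rho : I -> 'M[k]_r) (v : vec) : 'M[k]_r :=
  \sum_i v i *: rho i.

Definition is_module (r : nat) (rho : I -> 'M[k]_r) : Prop :=
  rep rho (hunit H) = 1%:M /\
  forall a b, rep rho (mulv a b) = rep rho a *m rep rho b.

Definition character (r : nat) (rho : I -> 'M[k]_r) (v : vec) : k :=
  \tr (rep rho v).

(* a subspace (row space of U, column vectors are U's rows transposed)
   stable under the action v |-> rho(a) v *)
Definition submodule (r : nat) (rho : I -> 'M[k]_r) (U : 'M[k]_r) : bool :=
  [forall i, (U *m (rho i)^T <= U)%MS].

Definition semisimple : Prop :=
  forall (r : nat) (rho : I -> 'M[k]_r), is_module rho ->
  forall U : 'M[k]_r, submodule rho U ->
  exists W : 'M[k]_r, submodule rho W /\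
    ((U + W)%MS == 1%:M)%MS /\ ((U :&: W)%MS == (0 : 'M[k]_r))%MS.

Definition is_hopf_aut (sigma : I -> vec) : Prop :=
  [/\ bijective (lapp sigma),
      lapp sigma (hunit H) = hunit H,
      (forall a b, lapp sigma (mulv a b) = mulv (lapp sigma a) (lapp sigma b)),
      (forall i j l, \sum_p sigma i p * hcomul H p j l
                     = \sum_j' \sum_l' hcomul H i j' l' * sigma j' j * sigma l' l) &
      (forall i, counitv (sigma i) = hcounit H i)].

Definition has_order (sigma : I -> vec) (n : nat) : Prop :=
  [/\ (0 < n)%N,
      (forall v, iter n (lapp sigma) v = v) &
      (forall j, (0 < j < n)%N -> exists v, iter j (lapp sigma) v <> v)].

Definition is_normalized_integral (L : vec) : Prop :=
  counitv L = 1 /\ forall a, mulv a L = [ffun l => counitv a * L l].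

(* iterated comultiplication Delta^(m) = (id (x) Delta^(m-1)) o Delta,
   Delta^(0) = eps; itcomul s h = coefficient of e_{s_1}(x)...(x)e_{s_m} *)
Fixpoint itcomul (s : seq I) (h : vec) : k :=
  match s with
  | [::] => counitv h
  | i :: s' => \sum_j h j * \sum_l hcomul H j i l * itcomul s' (bvec l)
  end.

Definition prodv (l : seq vec) : vec := foldr mulv (hunit H) l.

(* Hopf power h^[m, sigma] = sum h_1 sigma(h_2) ... sigma^(m-1)(h_m) *)
Definition hopf_power (m : nat) (sigma : I -> vec) (h : vec) : vec :=
  [ffun q => \sum_(t : m.-tuple I)
     itcomul t h *
     prodv [seq iter (val j) (lapp sigma) (bvec (tnth t j)) | j <- enum 'I_m] q].

End HopfDefs.

(* ---------- the smash coproduct K = A # k^G, G = <tau> of order n ---------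
   Elements of G are tau^x, x : 'I_n (exponent mod n).  Basis of K is
   e_i # p_x, indexed by I * 'I_n. *)
Section Smash.
Variables (k : fieldType) (I : finType) (H : hopf_data k I)
          (tau : I -> vec k I) (n : nat).

Definition gdiv (y x : 'I_n) : 'I_n := insubd x ((x + n - y) %% n)%N.
Definition ginv (x : 'I_n) : 'I_n := insubd x ((n - x) %% n)%N.
Definition gact (x : 'I_n) (a : vec k I) : vec k I := iter x (lapp tau) a.

Definition smash : hopf_data k (I * 'I_n)%type :=
  HopfData
    (fun ix jy => [ffun lz : (I * 'I_n)%type =>
       ((ix.2 == jy.2) && (lz.2 == ix.2))%:R * hmul H ix.1 jy.1 lz.1])
    [ffun lz : (I * 'I_n)%type => hunit H lz.1]
    (fun ix jy lz =>
       (lz.2 == gdiv jy.2 ix.2)%:R *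
       \sum_q hcomul H ix.1 jy.1 q * gact (ginv jy.2) (@bvec k I q) lz.1)
    (fun ix => (val ix.2 == 0%N)%:R * hcounit H ix.1)
    (fun ix => [ffun lz : (I * 'I_n)%type =>
       (lz.2 == ginv ix.2)%:R * gact (ginv ix.2) (hanti H ix.1) lz.1]).

Definition smash_integral (L : vec k I) : vec k (I * 'I_n)%type :=
  [ffun lz : (I * 'I_n)%type => (val lz.2 == 0%N)%:R * L lz.1].

(* the K-module M built from the A-module N: a # p_x acts as a if
   x = tau^{-1} (exponent n-1), and as 0 otherwise *)
Definition smash_module (r : nat) (rho : I -> 'M[k]_r) : (I * 'I_n)%type -> 'M[k]_r :=
  fun ix => (val ix.2 == n.-1)%:R *: rho ix.1.

End Smash.

(* Main.v *)
Require Import Defs.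
From HB Require Import structures.
From mathcomp Require Import all_boot all_order all_algebra.
From mathcomp Require Import ring zify.
Set Implicit Arguments. Unset Strict Implicit. Unset Printing Implicit Defensive.
Import GRing.Theory.
Local Open Scope ring_scope.

Section SumSeq.
Variables (k : fieldType) (T : finType).

Fixpoint sumseq (p : nat) (F : seq T -> k) : k :=
  match p with 0 => F [::] | p'.+1 => \sum_i sumseq p' (fun s => F (i :: s)) end.

Lemma sumseq_tuple p (F : seq T -> k) :
  \sum_(t : p.-tuple T) F t = sumseq p F.
Proof.
elim: p F => [|p IH] F /=.
  rewrite (big_pred1 [tuple]) // => t; apply/esym/eqP; exact: tuple0.
rewrite (reindex (fun x : T * p.-tuple T => [tuple of x.1 :: x.2])) /=; last first.
  exists (fun t : p.+1.-tuple T => (thead t, [tuple of behead t])).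
    case=> a t /=; rewrite [X in (_, X)](_ : _ = t) //; exact: val_inj.
  move=> t _; apply: val_inj => /=; by case: t => [[|a s] //=].
rewrite -(pair_bigA _ (fun a t => F (a :: val t))) /=; apply: eq_bigr => i _; exact: IH.
Qed.

Lemma sumseq_ext p (F G : seq T -> k) :
  (forall s, size s = p -> F s = G s) -> sumseq p F = sumseq p G.
Proof.
elim: p F G => [|p IH] F G H /=; first exact: H.
apply: eq_bigr => i _; apply: IH => s hs; apply: H; by rewrite /= hs.
Qed.

Lemma sumseq_mull p (F : seq T -> k) a :
  sumseq p (fun s => a * F s) = a * sumseq p F.
Proof.
elim: p F => [|p IH] F //=; rewrite mulr_sumr; apply: eq_bigr => i _; exact: IH.
Qed.

Lemma sumseq_sum (J : finType) p (F : J -> seq T -> k) :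
  sumseq p (fun s => \sum_j F j s) = \sum_j sumseq p (F j).
Proof.
elim: p F => [|p IH] F //=.
under eq_bigr do rewrite IH.
exact: exchange_big.
Qed.

Lemma sumseq_exch p q (F : seq T -> seq T -> k) :
  sumseq p (fun s => sumseq q (F s)) = sumseq q (fun u => sumseq p (fun s => F s u)).
Proof.
elim: p F => [|p IH] F //=.
under eq_bigr do rewrite IH.
by rewrite -sumseq_sum.
Qed.

End SumSeq.


Lemma sumseq_mulr (k : fieldType) (T : finType) p (F : seq T -> k) a :
  sumseq p (fun s => F s * a) = sumseq p F * a.
Proof. rewrite mulrC -sumseq_mull; apply: sumseq_ext => s _; exact: mulrC. Qed.

Lemma sumseq_eq (k : fieldType) (T : finType) p (F G : seq T -> k) :
  (forall s, F s = G s) -> sumseq p F = sumseq p G.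
Proof. move=> h; apply: sumseq_ext => s _; exact: h. Qed.

Section ALevel.
Variables (k : fieldType) (I : finType) (H : hopf_data k I) (tau : I -> vec k I).
Local Notation e := (bvec k).

Lemma sum_bvec (T : finType) (l : T) (F : T -> k) :
  \sum_j bvec k l j * F j = F l.
Proof.
rewrite (bigD1 l) //= big1 ?addr0; first by rewrite /bvec ffunE eqxx mul1r.
by move=> j /negPf hj; rewrite /bvec ffunE eq_sym hj mul0r.
Qed.

Lemma sum_bvec' (T : finType) (l : T) (F : T -> k) :
  \sum_j F j * bvec k l j = F l.
Proof. rewrite -[RHS](sum_bvec l); apply: eq_bigr => j _; exact: mulrC. Qed.

Lemma lapp_bvec (sigma : I -> vec k I) j : lapp sigma (e j) = sigma j.
Proof. apply/ffunP => l; rewrite ffunE; exact: (sum_bvec j (fun i => sigma i l)). Qed.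

Lemma iter_lin (sigma : I -> vec k I) c v l :
  iter c (lapp sigma) v l = \sum_i v i * iter c (lapp sigma) (e i) l.
Proof.
elim: c v l => [|c IH] v l /=.
  by rewrite -[LHS](sum_bvec' l v); apply: eq_bigr => i _; rewrite /bvec !ffunE eq_sym.
rewrite ffunE.
under [RHS]eq_bigr do rewrite ffunE mulr_sumr.
rewrite exchange_big /=.
apply: eq_bigr => j _; rewrite (IH v j) mulr_suml; apply: eq_bigr => i _.
by rewrite mulrA.
Qed.

Lemma counitv_lin h : counitv H h = \sum_l h l * counitv H (e l).
Proof. rewrite /counitv; apply: eq_bigr => l _; by rewrite sum_bvec. Qed.

Lemma ic_lin s h : itcomul H s h = \sum_l h l * itcomul H s (e l).
Proof.
case: s => [|i s] /=; first exact: counitv_lin.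
apply: eq_bigr => l _; by rewrite sum_bvec.
Qed.

Lemma mulv_bvec u w q : mulv H (e u) w q = \sum_j w j * hmul H u j q.
Proof.
rewrite ffunE -(sum_bvec u (fun i => \sum_j w j * hmul H i j q)).
apply: eq_bigr => i _; rewrite mulr_sumr; apply: eq_bigr => j _; by rewrite mulrA.
Qed.

Lemma mulv_l a w q : mulv H a w q = \sum_u a u * mulv H (e u) w q.
Proof.
rewrite ffunE; apply: eq_bigr => u _; rewrite mulv_bvec mulr_sumr.
apply: eq_bigr => j _; by rewrite mulrA.
Qed.

Lemma mulv_r_sumseq p a (w : vec k I) (f : seq I -> k) (G : seq I -> vec k I) q :
  (forall j, w j = sumseq p (fun u => f u * G u j)) ->
  mulv H a w q = sumseq p (fun u => f u * mulv H a (G u) q).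
Proof.
move=> hw; rewrite ffunE.
transitivity (\sum_i \sum_j sumseq p (fun u => a i * (f u * G u j) * hmul H i j q)).
  apply: eq_bigr => i _; apply: eq_bigr => j _.
  by rewrite hw sumseq_mulr sumseq_mull.
under eq_bigr do rewrite -sumseq_sum.
rewrite -sumseq_sum; apply: sumseq_eq => u; rewrite ffunE mulr_sumr.
apply: eq_bigr => i _; rewrite mulr_sumr; apply: eq_bigr => j _; ring.
Qed.

End ALevel.


Section ALevel2.
Variables (k : fieldType) (I : finType) (H : hopf_data k I) (tau : I -> vec k I).
Local Notation e := (@bvec k I).

Fixpoint tw c (s : seq I) : seq (vec k I) :=
  match s with [::] => [::] | i :: s' => iter c (lapp tau) (e i) :: tw c.+1 s' end.

Fixpoint coef c (t s : seq I) : k :=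
  match t, s with
  | t0 :: t', s0 :: s' => iter c (lapp tau) (e t0) s0 * coef c.+1 t' s'
  | _, _ => 1 end.

Lemma P1 t c q :
  prodv H (tw c t) q = sumseq (size t) (fun u => coef c t u * prodv H (map e u) q).
Proof.
elim: t c q => [|t0 t IH] c q /=; first by rewrite mul1r.
rewrite mulv_l; apply: eq_bigr => u _.
rewrite (@mulv_r_sumseq _ _ _ (size t) _ _ (coef c.+1 t) (fun u => prodv H (map e u))); last first.
  by move=> j; exact: IH.
rewrite -sumseq_mull; apply: sumseq_eq => u' /=; ring.
Qed.

Definition E c s h := sumseq (size s) (fun t => itcomul H t h * coef c t s).

Lemma E_nil c h : E c [::] h = counitv H h.
Proof. by rewrite /E /= mulr1. Qed.

Lemma E_lin c s h : E c s h = \sum_l h l * E c s (e l).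
Proof.
rewrite /E.
transitivity (sumseq (size s) (fun t => \sum_l h l * (itcomul H t (e l) * coef c t s))).
  apply: sumseq_eq => t; rewrite ic_lin mulr_suml; apply: eq_bigr => l _; ring.
rewrite sumseq_sum; apply: eq_bigr => l _; exact: sumseq_mull.
Qed.

Lemma E_cons c i s h : E c (i :: s) h =
  \sum_t0 iter c (lapp tau) (e t0) i *
     (\sum_j h j * \sum_l hcomul H j t0 l * E c.+1 s (e l)).
Proof.
rewrite /E /=; apply: eq_bigr => t0 _.
transitivity (sumseq (size s) (fun t => \sum_j \sum_l
   iter c (lapp tau) (e t0) i * h j * hcomul H j t0 l * (itcomul H t (e l) * coef c.+1 t s))).
  apply: sumseq_eq => t /=; rewrite mulr_suml; apply: eq_bigr => j _.
  rewrite mulr_sumr !mulr_suml; apply: eq_bigr => l _; ring.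
rewrite sumseq_sum mulr_sumr; apply: eq_bigr => j _.
rewrite sumseq_sum mulr_sumr mulr_sumr; apply: eq_bigr => l _.
by rewrite sumseq_mull; ring.
Qed.

End ALevel2.


Section Shift.
Variables (k : fieldType) (I : finType) (H : hopf_data k I) (tau : I -> vec k I).
Local Notation e := (@bvec k I).
Hypothesis hco : forall i j l, \sum_p tau i p * hcomul H p j l
                     = \sum_j' \sum_l' hcomul H i j' l' * tau j' j * tau l' l.
Hypothesis hcu : forall i, counitv H (tau i) = hcounit H i.

Lemma E_shift s c b : E H tau c.+1 s b = E H tau c s (lapp tau b).
Proof.
elim: s c b => [|i s IH] c b.
  rewrite !E_nil /counitv.
  under [RHS]eq_bigr do rewrite ffunE mulr_suml.
  rewrite exchange_big /=; apply: eq_bigr => j _.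
  by rewrite -hcu /counitv mulr_sumr; apply: eq_bigr => x _; rewrite mulrA.
rewrite !E_cons.
set Ix := fun x => iter c (lapp tau) (e x) i.
set F := fun l => E H tau c.+1 s (e l).
transitivity (\sum_p \sum_x \sum_l2 b p * Ix x * F l2 *
   (\sum_t0 \sum_l hcomul H p t0 l * tau t0 x * tau l l2)).
  have hF : forall l, E H tau c.+2 s (e l) = \sum_l2 tau l l2 * F l2.
    move=> l; rewrite IH E_lin lapp_bvec //.
  have hI : forall t0, iter c.+1 (lapp tau) (e t0) i = \sum_x tau t0 x * Ix x.
    move=> t0; rewrite iterSr lapp_bvec iter_lin //.
  under eq_bigr do rewrite hI.
  transitivity (\sum_t0 \sum_x \sum_j \sum_l \sum_l2 b j * Ix x * F l2 *
     (hcomul H j t0 l * tau t0 x * tau l l2)).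
    apply: eq_bigr => t0 _; rewrite mulr_suml; apply: eq_bigr => x _.
    rewrite mulr_sumr; apply: eq_bigr => j _; rewrite mulr_sumr mulr_sumr.
    apply: eq_bigr => l _; rewrite hF mulr_sumr mulr_sumr mulr_sumr.
    apply: eq_bigr => l2 _; ring.
  rewrite exchange_big /=.
  under eq_bigr => x _ do rewrite exchange_big /=.
  rewrite exchange_big /=.
  apply: eq_bigr => j _; apply: eq_bigr => x _.
  under eq_bigr => t0 _ do rewrite exchange_big /=.
  rewrite exchange_big /=; apply: eq_bigr => l2 _.
  rewrite mulr_sumr; apply: eq_bigr => t0 _; rewrite mulr_sumr.
  by apply: eq_bigr => l _.
transitivity (\sum_p \sum_x \sum_l2 b p * Ix x * F l2 *
   (\sum_j tau p j * hcomul H j x l2)).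
  by apply: eq_bigr => p _; apply: eq_bigr => x _; apply: eq_bigr => l2 _; rewrite hco.
symmetry.
transitivity (\sum_x \sum_j \sum_p \sum_l2 b p * Ix x * F l2 * (tau p j * hcomul H j x l2)).
  apply: eq_bigr => x _; rewrite mulr_sumr; apply: eq_bigr => j _.
  rewrite ffunE mulr_suml mulr_sumr; apply: eq_bigr => p _.
  rewrite mulr_sumr mulr_sumr; apply: eq_bigr => l2 _; rewrite /Ix /F; ring.
under eq_bigr => x _ do rewrite exchange_big /=.
rewrite exchange_big /=.
apply: eq_bigr => p _; apply: eq_bigr => x _.
rewrite exchange_big /=; apply: eq_bigr => l2 _.
rewrite mulr_sumr; apply: eq_bigr => j _; ring.
Qed.
End Shift.


Lemma sum_pair (k : fieldType) (I J : finType) (F : I * J -> k) :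
  \sum_p F p = \sum_i \sum_j F (i, j).
Proof. by rewrite pair_bigA; apply: eq_bigr => -[]. Qed.

Lemma sum_eqr (k : fieldType) (J : finType) (w : J) (F : J -> k) :
  \sum_v (v == w)%:R * F v = F w.
Proof.
rewrite (bigD1 w) //= eqxx mul1r big1 ?addr0 // => v /negPf ->; exact: mul0r.
Qed.

Lemma sum_ord_eq (k : fieldType) n x (hx : (x < n)%N) (F : 'I_n -> k) :
  \sum_(y : 'I_n) (val y == x)%:R * F y = F (Ordinal hx).
Proof.
rewrite -(sum_eqr (Ordinal hx)); apply: eq_bigr => y _; done.
Qed.

Section KLevel.
Variables (k : fieldType) (I : finType) (H : hopf_data k I) (tau : I -> vec k I)
  (n : nat).
Local Notation e := (@bvec k I).
Local Notation K := (smash H tau n).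
Local Notation eK := (@bvec k (I * 'I_n)%type).

Lemma K1 (l : seq (I * 'I_n)) (q : I) (y : 'I_n) :
  prodv K (map eK l) (q, y) =
  (all (fun p => p.2 == y) l)%:R * prodv H (map (fun p => e p.1) l) q.
Proof.
elim: l q => [|[i x] l IH] q /=.
  by rewrite ffunE mul1r.
rewrite mulv_bvec mulv_bvec sum_pair.
transitivity ((y == x)%:R * \sum_c prodv K (map eK l) (c, x) * hmul H i c q).
  rewrite mulr_sumr; apply: eq_bigr => c _.
  rewrite (bigD1 x) //= big1; last first.
    by move=> d /negPf hd; rewrite ffunE /= eq_sym hd /= mul0r mulr0.
  rewrite ffunE /= addr0.
  have -> : (x == x) = true by exact: eqxx.
  by case: (y == x); rewrite /= ?mul1r ?mul0r ?mulr0.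
case: (eqVneq y x) => [<-|hyx]; last first.
  by rewrite /= !mul0r.
rewrite /= mul1r mulr_sumr; apply: eq_bigr => c _.
by rewrite IH mulrA.
Qed.

Definition hsm (h : vec k I) (x : nat) : vec k (I * 'I_n)%type :=
  [ffun p => (val p.2 == x)%:R * h p.1].

Lemma bvec_hsm l (v : 'I_n) : eK (l, v) = hsm (e l) (val v).
Proof.
apply/ffunP => -[a b]; rewrite !ffunE /= xpair_eqE.
case: (eqVneq v b) => [->|hvb]; first by rewrite eqxx /= mul1r andbT.
have -> : (val b == val v) = false by apply/negbTE; rewrite eq_sym; exact: hvb.
by rewrite andbF mul0r.
Qed.

End KLevel.

Lemma sum_bvec_l (k : fieldType) (I : finType) (i : I) (F : I -> k) :
  \sum_t bvec k t i * F t = F i.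
Proof.
rewrite -(sum_bvec i F); apply: eq_bigr => t _; by rewrite /bvec !ffunE eq_sym.
Qed.


Section KLevel2.
Variables (k : fieldType) (I : finType) (H : hopf_data k I) (tau : I -> vec k I)
  (n : nat) (z : 'I_n).
Local Notation e := (@bvec k I).
Local Notation K := (smash H tau n).
Local Notation eK := (@bvec k (I * 'I_n)%type).
Hypothesis hn : (0 < n)%N.
Hypothesis hz : val z = n.-1.
Hypothesis htau1 : forall v, iter n (lapp tau) v = v.
Hypothesis hco : forall i j l, \sum_p tau i p * hcomul H p j l
                     = \sum_j' \sum_l' hcomul H i j' l' * tau j' j * tau l' l.
Hypothesis hcu : forall i, counitv H (tau i) = hcounit H i.

Lemma gact_z v : gact tau (ginv z) v = lapp tau v.
Proof.
rewrite /gact /ginv val_insubd ltn_pmod // hz.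
case: n hn htau1 z hz => [//|[|n']] _ ht _ _ /=.
  exact: (esym (ht v)).
by rewrite subSnn (modn_small (isT : (1 < n'.+2)%N)).
Qed.

Lemma K2 s : forall x h (hx : (x < n)%N),
  itcomul K (map (fun i => (i, z)) s) (hsm n h x)
  = ((((x + size s) %% n)%N == 0%N))%:R * E H tau 0 s h.
Proof.
elim: s => [|i s IH] x h hx /=.
  rewrite E_nil /counitv sum_pair mulr_sumr; apply: eq_bigr => j _.
  rewrite (eq_bigr (fun y => (val y == x)%:R * ((val y == 0%N)%:R * (h j * hcounit H j)))); last first.
    by move=> y _; rewrite ffunE /=; ring.
  by rewrite sum_ord_eq /= addn0 modn_small.
transitivity (\sum_j h j * \sum_l (\sum_q hcomul H j i q * gact tau (ginv z) (e q) l) *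
   ((((x + (size s).+1) %% n)%N == 0%N)%:R * E H tau 0 s (e l))).
  rewrite sum_pair; apply: eq_bigr => j _.
  rewrite (eq_bigr (fun y => (val y == x)%:R * (h j * \sum_lv hcomul K (j, y) (i, z) lv
        * itcomul K (map (fun i => (i, z)) s) (eK lv)))); last first.
    by move=> y _; rewrite ffunE /=; ring.
  rewrite sum_ord_eq; congr (h j * _).
  rewrite sum_pair; apply: eq_bigr => l _.
  set Y := Ordinal hx.
  rewrite (eq_bigr (fun v => (v == gdiv z Y)%:R * ((\sum_q hcomul H j i q * gact tau (ginv z) (e q) l)
        * itcomul K (map (fun i => (i, z)) s) (eK (l, v))))); last first.
    by move=> v _ /=; rewrite mulrA.
  rewrite sum_eqr bvec_hsm IH; last exact: ltn_ord.
  have -> : (((\val (gdiv z Y) + size s) %% n)%N = ((x + (size s).+1) %% n)%N).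
    rewrite /gdiv val_insubd ltn_pmod // hz /= modnDml; congr (_ %% _)%N.
    lia.
  by [].
rewrite E_cons /= sum_bvec_l.
set c := _%:R.
rewrite mulr_sumr; apply: eq_bigr => j _.
rewrite mulrCA; congr (h j * _).
rewrite mulr_sumr.
transitivity (\sum_l \sum_q c * (hcomul H j i q * gact tau (ginv z) (e q) l * E H tau 0 s (e l))).
  apply: eq_bigr => l _; rewrite mulr_suml; apply: eq_bigr => q _; ring.
rewrite exchange_big /=; apply: eq_bigr => q _.
rewrite [in RHS](E_shift hco hcu) -gact_z [in RHS]E_lin mulr_sumr mulr_sumr.
apply: eq_bigr => l _; ring.
Qed.

End KLevel2.


Lemma natr_andb (k : fieldType) (a b : bool) : ((a && b)%:R : k) = a%:R * b%:R.
Proof. by case: a; case: b; rewrite ?mul1r ?mul0r. Qed.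

Lemma sumseq_filter (k : fieldType) (I J : finType) (z : J) p (G : seq (I * J) -> k) :
  sumseq p (fun T => (all (fun q => q.2 == z) T)%:R * G T)
  = sumseq p (fun u => G (map (fun i => (i, z)) u)).
Proof.
elim: p G => [|p IH] G /=; first by rewrite mul1r.
rewrite sum_pair; apply: eq_bigr => i _.
rewrite -(IH (fun T => G ((i, z) :: T))).
rewrite (eq_bigr (fun y => (y == z)%:R * sumseq p (fun T => (all (fun q => q.2 == z) T)%:R * G ((i, y) :: T)))).
  exact: (sum_eqr z (fun y => sumseq p (fun T => (all (fun q => q.2 == z) T)%:R * G ((i, y) :: T)))).
move=> y _; rewrite -sumseq_mull; apply: sumseq_eq => T /=.
by rewrite natr_andb mulrA.
Qed.

Lemma tw_iota (k : fieldType) (I : finType) (tau : I -> vec k I) x0 s c :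
  tw tau c s = [seq iter (c + i) (lapp tau) (bvec k (nth x0 s i)) | i <- iota 0 (size s)].
Proof.
elim: s c => [|a s IH] c //=.
rewrite (IH c.+1); f_equal; first by f_equal; lia.
rewrite -(addn0 1%N) iotaDl -map_comp; apply: eq_map => i.
rewrite /comp (_ : (c + (1 + i))%N = (c.+1 + i)%N) //; lia.
Qed.

Lemma lapp_id (k : fieldType) (T : finType) (v : vec k T) : lapp (@bvec k T) v = v.
Proof.
apply/ffunP => l; rewrite ffunE -[RHS](sum_bvec_l l v); apply: eq_bigr => i _.
exact: mulrC.
Qed.


Lemma sum_pairV (V : nmodType) (I J : finType) (F : I * J -> V) :
  \sum_p F p = \sum_i \sum_j F (i, j).
Proof. by rewrite pair_bigA; apply: eq_bigr => -[]. Qed.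

Unset Implicit Arguments.

Theorem theorem4p2 (k : closedFieldType) (I : finType) (H : hopf_data k I)
  (tau : I -> vec k I) (n : nat) (L : vec k I)
  (r : nat) (rhoN : I -> 'M[k]_r) (m : nat) :
  [pchar k] =i pred0 ->
  is_hopf H -> semisimple H ->
  is_hopf_aut H tau -> has_order tau n ->
  is_normalized_integral H L ->
  is_module H rhoN ->
  (0 < m)%N -> (n %| m)%N ->
  character rhoN (hopf_power H m tau L)
  = character (smash_module (n := n) rhoN)
      (hopf_power (smash H tau n) m (@bvec k (I * 'I_n)%type)
         (smash_integral n L)).
Proof.
move=> _ _ _ [_ _ _ hco hcu] [hn hit _] _ _ hm hnm.
have hzn : (n.-1 < n)%N by rewrite ltn_predL.
set z : 'I_n := Ordinal hzn.
have hz : val z = n.-1 by [].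
set vK := hopf_power (smash H tau n) _ _ _.
have -> : character (smash_module (n := n) rhoN) vK = character rhoN [ffun q => vK (q, z)].
  rewrite /character /rep; congr (\tr _).
  rewrite sum_pairV; apply: eq_bigr => i _.
  under eq_bigr do rewrite scalerA.
  rewrite /= -scaler_suml ffunE; congr (_ *: _).
  rewrite -(sum_ord_eq hzn (fun y => vK (i, y))); apply: eq_bigr => y _; exact: mulrC.
congr (character rhoN _); apply/ffunP => q; rewrite ffunE /vK; clear vK.
case: m hm hnm => // m' _ hnm.
transitivity (sumseq m'.+1 (fun u => E H tau 0 u L * prodv H (map (@bvec k I) u) q)).
  rewrite /hopf_power ffunE.
  transitivity (sumseq m'.+1 (fun t => itcomul H t L * prodv H (tw tau 0 t) q)).
    rewrite -sumseq_tuple; apply: eq_bigr => t _; congr (_ * prodv H _ q).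
    rewrite (tw_iota tau (thead t)) size_tuple -val_enum_ord -map_comp.
    apply: eq_map => j /=; by rewrite (tnth_nth (thead t)).
  rewrite (@sumseq_ext _ _ _ _ (fun t => sumseq m'.+1 (fun u =>
             itcomul H t L * coef tau 0 t u * prodv H (map (@bvec k I) u) q))); last first.
    move=> t ht; rewrite P1 ht -sumseq_mull; apply: sumseq_eq => u; ring.
  rewrite sumseq_exch; apply: sumseq_ext => u hu; by rewrite sumseq_mulr /E hu.
symmetry; rewrite /hopf_power ffunE.
transitivity (sumseq m'.+1 (fun T => itcomul (smash H tau n) T (smash_integral n L)
                 * prodv (smash H tau n) (map (@bvec k (I * 'I_n)%type) T) (q, z))).
  rewrite -sumseq_tuple; apply: eq_bigr => T _; congr (_ * prodv _ _ _).
  rewrite -[in RHS](map_tnth_enum T) -map_comp; apply: eq_map => j /=.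
  by elim: (nat_of_ord j) => //= j' ->; rewrite lapp_id.
rewrite (@sumseq_eq _ _ _ _ (fun T => (all (fun p => p.2 == z) T)%:R *
   (itcomul (smash H tau n) T (smash_integral n L)
    * prodv H (map (fun p => @bvec k I p.1) T) q))); last first.
  by move=> T; rewrite K1 mulrCA.
rewrite sumseq_filter; apply: sumseq_ext => u hu.
change (smash_integral n L) with (hsm n L 0).
rewrite (K2 hn hz hit hco hcu) // add0n hu.
have -> : ((m'.+1 %% n)%N == 0%N) = true by exact: hnm.
by rewrite mul1r -map_comp.
Qed.
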